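(* The logic $\mathsf{iCB}:=\mathsf{iCC}\oplus(((p\mathrel{\Box\!\!\!\rightarrow} q)\wedge(q\mathrel{\Box\!\!\!\rightarrow} p)\wedge(p\mathrel{\Box\!\!\!\rightarrow} r))\to(q\mathrel{\Box\!\!\!\rightarrow} r))\oplus((p\mathrel{\Box\!\!\!\rightarrow} q)\to(p\mathrel{\Box\!\!\!\rightarrow}(p\mathrel{\Box\!\!\!\rightarrow} q)))$ is sound and complete with respect to the class of cautious conditional frames satisfying, for all worlds $x$ and upsets $a,b$: if $R_a[x]\subseteq b$ and $R_b[x]\subseteq a$ then ${\uparrow}R_a[x]={\uparrow}R_b[x]$; and $(R_a\circ R_a)\subseteq(R_a\circ\leq)$.
   Context: Formulas: $\phi ::= p\mid\bot\mid\phi\wedge\phi\mid\phi\vee\phi\mid\phi\to\phi\mid\phi\mathrel{\Box\!\!\!\rightarrow}\phi$. $\mathsf{ICK}\oplus\Gamma$ is the smallest set containing intuitionistic propositional logic, $\Gamma$, $(p\mathrel{\Box\!\!\!\rightarrow}(q\wedge r))\leftrightarrow((p\mathrel{\Box\!\!\!\rightarrow} q)\wedge(p\mathrel{\Box\!\!\!\rightarrow} r))$ and $(p\mathrel{\Box\!\!\!\rightarrow}\top)\leftrightarrow\top$, closed under uniform substitution, modus ponens and congruence rules for both arguments of $\mathrel{\Box\!\!\!\rightarrow}$. $\mathsf{iCC}=\mathsf{ICK}\oplus(p\mathrel{\Box\!\!\!\rightarrow} p)\oplus(((p\mathrel{\Box\!\!\!\rightarrow} q)\wedge((p\wedge q)\mathrel{\Box\!\!\!\rightarrow}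 r))\to(p\mathrel{\Box\!\!\!\rightarrow} r))\oplus(((p\mathrel{\Box\!\!\!\rightarrow} q)\wedge(p\mathrel{\Box\!\!\!\rightarrow} r))\to((p\wedge q)\mathrel{\Box\!\!\!\rightarrow} r))$. A conditional frame is $(X,\leq,\mathcal{R})$, $(X,\leq)$ a nonempty preorder, $\mathcal{R}=\{R_a\mid a\text{ an upset}\}$ with $(\leq\circ R_a)\subseteq(R_a\circ\leq)$; $x\models\phi\mathrel{\Box\!\!\!\rightarrow}\psi$ iff every $y$ with $xR_{V(\phi)}y$ satisfies $\psi$. A cautious conditional frame satisfies $R_a[x]\subseteq a$ and ($R_a[x]\subseteq b\subseteq a$ implies ${\uparrow}R_a[x]={\uparrow}R_b[x]$) for all $x$ and upsets $a,b$. *)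

(* Defs.v *)
Inductive form : Type :=
| Var  : nat -> form
| Bot  : form
| And  : form -> form -> form
| Or   : form -> form -> form
| Imp  : form -> form -> form
| Cond : form -> form -> form.

Definition Top : form := Imp Bot Bot.
Definition Iff (a b : form) : form := And (Imp a b) (Imp b a).

Fixpoint subst (s : nat -> form) (f : form) : form :=
  match f with
  | Var n => s n
  | Bot => Bot
  | And a b => And (subst s a) (subst s b)
  | Or a b => Or (subst s a) (subst s b)
  | Imp a b => Imp (subst s a) (subst s b)
  | Cond a b => Cond (subst s a) (subst s b)
  end.

Definition p0 : form := Var 0.
Definition q0 : form := Var 1.
Definition r0 : form := Var 2.

Inductive ICK_plus (G : form -> Prop) : form -> Prop :=
| ax_K  : forall a b, ICK_plus G (Imp a (Imp b a))
| ax_S  : forall a b c,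
    ICK_plus G (Imp (Imp a (Imp b c)) (Imp (Imp a b) (Imp a c)))
| ax_andE1 : forall a b, ICK_plus G (Imp (And a b) a)
| ax_andE2 : forall a b, ICK_plus G (Imp (And a b) b)
| ax_andI  : forall a b, ICK_plus G (Imp a (Imp b (And a b)))
| ax_orI1  : forall a b, ICK_plus G (Imp a (Or a b))
| ax_orI2  : forall a b, ICK_plus G (Imp b (Or a b))
| ax_orE   : forall a b c,
    ICK_plus G (Imp (Imp a c) (Imp (Imp b c) (Imp (Or a b) c)))
| ax_botE  : forall a, ICK_plus G (Imp Bot a)
| ax_G : forall f, G f -> ICK_plus G f
| ax_CM : ICK_plus G (Iff (Cond p0 (And q0 r0)) (And (Cond p0 q0) (Cond p0 r0)))
| ax_CN : ICK_plus G (Iff (Cond p0 Top) Top)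
| rule_subst : forall s f, ICK_plus G f -> ICK_plus G (subst s f)
| rule_MP : forall a b, ICK_plus G (Imp a b) -> ICK_plus G a -> ICK_plus G b
| rule_congL : forall a b c, ICK_plus G (Iff a b) ->
    ICK_plus G (Iff (Cond a c) (Cond b c))
| rule_congR : forall a b c, ICK_plus G (Iff a b) ->
    ICK_plus G (Iff (Cond c a) (Cond c b)).

Definition ax_ID : form := Cond p0 p0.
Definition ax_CUT : form :=
  Imp (And (Cond p0 q0) (Cond (And p0 q0) r0)) (Cond p0 r0).
Definition ax_CMON : form :=
  Imp (And (Cond p0 q0) (Cond p0 r0)) (Cond (And p0 q0) r0).
Definition ax_CSO : form :=
  Imp (And (Cond p0 q0) (And (Cond q0 p0) (Cond p0 r0))) (Cond q0 r0).
Definition ax_4 : form :=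
  Imp (Cond p0 q0) (Cond p0 (Cond p0 q0)).

Definition iCC_axioms (f : form) : Prop :=
  f = ax_ID \/ f = ax_CUT \/ f = ax_CMON.
Definition iCB_axioms (f : form) : Prop :=
  iCC_axioms f \/ f = ax_CSO \/ f = ax_4.

Definition iCB : form -> Prop := ICK_plus iCB_axioms.

Definition upset {X : Type} (le : X -> X -> Prop) (a : X -> Prop) : Prop :=
  forall x y, le x y -> a x -> a y.

Definition comp {X : Type} (S T : X -> X -> Prop) : X -> X -> Prop :=
  fun x z => exists y, S x y /\ T y z.

Definition rel_incl {X : Type} (S T : X -> X -> Prop) : Prop :=
  forall x y, S x y -> T x y.

(* R_a is given for every predicate a, but only its values on upsets matter
   (all conditions below and the semantics only use upsets). *)
Record cframe : Type := {
  W : Type;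
  le : W -> W -> Prop;
  R : (W -> Prop) -> W -> W -> Prop;
  W_inhabited : inhabited W;
  le_refl : forall x, le x x;
  le_trans : forall x y z, le x y -> le y z -> le x z;
  R_mono : forall a, upset le a -> rel_incl (comp le (R a)) (comp (R a) le)
}.

Definition image (F : cframe) (a : W F -> Prop) (x : W F) : W F -> Prop :=
  fun y => R F a x y.
Definition up (F : cframe) (S : W F -> Prop) : W F -> Prop :=
  fun z => exists y, S y /\ le F y z.
Definition subset {X : Type} (S T : X -> Prop) : Prop := forall x, S x -> T x.
Definition seteq {X : Type} (S T : X -> Prop) : Prop := forall x, S x <-> T x.

Definition cautious (F : cframe) : Prop :=
  forall x (a b : W F -> Prop), upset (le F) a -> upset (le F) b ->
    subset (image F a x) a /\
    (subset (image F a x) b -> subset b a ->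
       seteq (up F (image F a x)) (up F (image F b x))).

Definition iCB_frame_cond (F : cframe) : Prop :=
  (forall x (a b : W F -> Prop), upset (le F) a -> upset (le F) b ->
     subset (image F a x) b -> subset (image F b x) a ->
     seteq (up F (image F a x)) (up F (image F b x))) /\
  (forall a : W F -> Prop, upset (le F) a ->
     rel_incl (comp (R F a) (R F a)) (comp (R F a) (le F))).

Fixpoint forces (F : cframe) (V : nat -> W F -> Prop) (f : form) : W F -> Prop :=
  match f with
  | Var n => V n
  | Bot => fun _ => False
  | And a b => fun x => forces F V a x /\ forces F V b x
  | Or a b => fun x => forces F V a x \/ forces F V b x
  | Imp a b => fun x => forall y, le F x y -> forces F V a y -> forces F V b y
  | Cond a b => fun x => forall y, R F (forces F V a) x y -> forces F V b y
  end.

Definition valuation (F : cframe) (V : nat -> W F -> Prop) : Prop :=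
  forall n, upset (le F) (V n).

Definition valid (F : cframe) (f : form) : Prop :=
  forall V, valuation F V -> forall x, forces F V f x.

(* Main.v *)
Require Import Defs.
From Stdlib Require Import Classical FunctionalExtensionality PropExtensionality Cantor Lia.

Section Sound.
Variable F : cframe.

Lemma persist V : valuation F V -> forall f, upset (le F) (forces F V f).
Proof.
  intros HV f; induction f; simpl; intros x y Hxy Hx.
  - exact (HV n x y Hxy Hx).
  - exact Hx.
  - destruct Hx; split; eauto.
  - destruct Hx; [left|right]; eauto.
  - intros z Hyz. apply Hx. eapply le_trans; eauto.
  - intros z Hz.
    destruct (R_mono F (forces F V f1) IHf1 x z (ex_intro _ y (conj Hxy Hz))) as [w [Hw1 Hw2]].
    eapply IHf2; eauto.
Qed.

Lemma forces_ext V1 V2 : (forall n, V1 n = V2 n) -> forall f, forces F V1 f = forces F V2 f.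
Proof.
  intros H; induction f; simpl; try rewrite IHf1, IHf2; auto.
Qed.

Lemma forces_subst V s f :
  forces F V (subst s f) = forces F (fun n => forces F V (s n)) f.
Proof.
  induction f; simpl; try rewrite IHf1, IHf2; auto.
Qed.

End Sound.

Lemma up_R (F : cframe) a x y : R F a x y -> up F (image F a x) y.
Proof. intros H; exists y; split; [exact H | apply le_refl]. Qed.

Theorem soundness f : iCB f -> forall F, cautious F -> iCB_frame_cond F -> valid F f.
Proof.
  intros Hf F Hc [Hcso H4].
  induction Hf; intros V HV x; simpl in *.
  - intros y _ Ha z Hyz _. eapply persist; eauto.
  - intros y _ H1 z Hyz H2 w Hzw H3.
    assert (le F y w) by (eapply le_trans; eauto).
    apply (H1 w H H3 w (le_refl _ _)). apply H2; auto.
  - intros y _ [H1 H2]; auto.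
  - intros y _ [H1 H2]; auto.
  - intros y _ H1 z Hyz H2. split; auto. eapply persist; eauto.
  - intros y _ H1; auto.
  - intros y _ H1; auto.
  - intros y _ H1 z Hyz H2 w Hzw [H3|H3].
    + apply H1; auto. eapply le_trans; eauto.
    + apply H2; auto.
  - intros y _ [].
  - destruct H as [[H|[H|H]]|[H|H]]; subst f; simpl; unfold p0, q0, r0.
    + intros y Hy. destruct (Hc x (V 0) (V 0) (HV 0) (HV 0)) as [H1 _]. apply H1; exact Hy.
    +
      intros y _ [H1 H2] z Hz.
      pose proof (persist F V HV) as P.
      destruct (Hc y (forces F V p0) (forces F V (And p0 q0)) (P _) (P _)) as [Hs Heq].
      assert (Hu : up F (image F (forces F V p0) y) z) by (apply up_R; exact Hz).
      apply Heq in Hu.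
      * destruct Hu as [w [Hw1 Hw2]]. apply (P r0 w z Hw2). apply H2; exact Hw1.
      * intros w Hw. split; [apply Hs; exact Hw | apply H1; exact Hw].
      * intros w [Hw _]; exact Hw.
    +
      intros y _ [H1 H2] z Hz.
      pose proof (persist F V HV) as P.
      destruct (Hc y (forces F V p0) (forces F V (And p0 q0)) (P _) (P _)) as [Hs Heq].
      assert (Hu : up F (image F (forces F V (And p0 q0)) y) z) by (apply up_R; exact Hz).
      apply Heq in Hu.
      * destruct Hu as [w [Hw1 Hw2]]. apply (P r0 w z Hw2). apply H2; exact Hw1.
      * intros w Hw. split; [apply Hs; exact Hw | apply H1; exact Hw].
      * intros w [Hw _]; exact Hw.
    +
      intros y _ [H1 [H2 H3]] z Hz.
      pose proof (persist F V HV) as P.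
      assert (Hu : up F (image F (forces F V q0) y) z) by (apply up_R; exact Hz).
      apply (Hcso y (forces F V p0) (forces F V q0) (P _) (P _)) in Hu.
      * destruct Hu as [w [Hw1 Hw2]]. apply (P r0 w z Hw2). apply H3; exact Hw1.
      * intros w Hw; apply H1; exact Hw.
      * intros w Hw; apply H2; exact Hw.
    +
      intros y _ H1 z Hz w Hw.
      pose proof (persist F V HV) as P.
      destruct (H4 (forces F V p0) (P _) y w (ex_intro _ z (conj Hz Hw))) as [u [Hu1 Hu2]].
      apply (P q0 u w Hu2). apply H1; exact Hu1.
  -
    split.
    + intros y _ H1. split; intros z Hz; apply H1; auto.
    + intros y _ [H1 H2] z Hz. split; [apply H1|apply H2]; auto.
  - split.
    + intros y _ _ z _ [].
    + intros y _ _ z Hz z' _ [].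
  - rewrite forces_subst. apply IHHf.
    intros n. apply persist; auto.
  - apply (IHHf1 V HV x x (le_refl _ _)). apply IHHf2; auto.
  - assert (E : forces F V a = forces F V b).
    { apply functional_extensionality; intros y. apply propositional_extensionality.
      destruct (IHHf V HV y) as [H1 H2]. split; [apply H1|apply H2]; apply le_refl. }
    rewrite E. split; intros y _ H; exact H.
  - assert (E : forces F V a = forces F V b).
    { apply functional_extensionality; intros y. apply propositional_extensionality.
      destruct (IHHf V HV y) as [H1 H2]. split; [apply H1|apply H2]; apply le_refl. }
    rewrite E. split; intros y _ H; exact H.
Qed.

Definition pr (x y : nat) : nat := Cantor.to_nat (x, y).
Lemma pr_inj x y x' y' : pr x y = pr x' y' -> x = x' /\ y = y'.
Proof.
  unfold pr; intros H.
  assert (E : Cantor.of_nat (Cantor.to_nat (x, y)) = Cantor.of_nat (Cantor.to_nat (x', y')))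
    by (rewrite H; reflexivity).
  rewrite !Cantor.cancel_of_to in E. inversion E; auto.
Qed.

Fixpoint enc (f : form) : nat :=
  match f with
  | Var n => pr 0 n
  | Bot => pr 1 0
  | And a b => pr 2 (pr (enc a) (enc b))
  | Or a b => pr 3 (pr (enc a) (enc b))
  | Imp a b => pr 4 (pr (enc a) (enc b))
  | Cond a b => pr 5 (pr (enc a) (enc b))
  end.

Lemma enc_inj : forall f g, enc f = enc g -> f = g.
Proof.
  induction f; destruct g; simpl; intros H;
  repeat match goal with
  | H : pr _ _ = pr _ _ |- _ => apply pr_inj in H; destruct H as [? ?]
  end; try discriminate; subst; auto;
  try (f_equal; auto).
Qed.

Definition ext (G : form -> Prop) (a : form) : form -> Prop := fun x => G x \/ x = a.

Inductive deriv (G : form -> Prop) : form -> Prop :=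
| d_hyp : forall f, G f -> deriv G f
| d_thm : forall f, iCB f -> deriv G f
| d_mp : forall a b, deriv G (Imp a b) -> deriv G a -> deriv G b.

Lemma iCB_I a : iCB (Imp a a).
Proof.
  pose proof (ax_S iCB_axioms a (Imp a a) a) as S1.
  pose proof (ax_K iCB_axioms a (Imp a a)) as K1.
  pose proof (ax_K iCB_axioms a a) as K2.
  exact (rule_MP _ _ _ (rule_MP _ _ _ S1 K1) K2).
Qed.

Lemma deduction G a b : deriv (ext G a) b -> deriv G (Imp a b).
Proof.
  induction 1.
  - destruct H as [H|H].
    + apply d_mp with f; [apply d_thm, ax_K | apply d_hyp; auto].
    + subst; apply d_thm, iCB_I.
  - apply d_mp with f; [apply d_thm, ax_K | apply d_thm; auto].
  - apply d_mp with (Imp a a0); auto.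
    apply d_mp with (Imp a (Imp a0 b)); auto. apply d_thm, ax_S.
Qed.

Lemma deriv_mono G G' f : (forall x, G x -> G' x) -> deriv G f -> deriv G' f.
Proof. intros H; induction 1; [apply d_hyp; auto | apply d_thm; auto | eapply d_mp; eauto]. Qed.

Lemma deriv0 f : deriv (fun _ => False) f -> iCB f.
Proof. induction 1; [contradiction | auto | eapply rule_MP; eauto]. Qed.

Definition E0 : form -> Prop := fun _ => False.

Lemma thm_of a b : deriv (ext E0 a) b -> iCB (Imp a b).
Proof. intros H; apply deriv0, deduction, H. Qed.

Ltac hyp := apply d_hyp; right; reflexivity.
Ltac thm := apply d_thm.

Lemma d_andI G a b : deriv G a -> deriv G b -> deriv G (And a b).
Proof. intros; eapply d_mp; [eapply d_mp; [thm; apply ax_andI|]|]; eauto. Qed.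
Lemma d_andE1 G a b : deriv G (And a b) -> deriv G a.
Proof. intros; eapply d_mp; [thm; apply ax_andE1|]; eauto. Qed.
Lemma d_andE2 G a b : deriv G (And a b) -> deriv G b.
Proof. intros; eapply d_mp; [thm; apply ax_andE2|]; eauto. Qed.

Lemma iff_intro a b : iCB (Imp a b) -> iCB (Imp b a) -> iCB (Iff a b).
Proof. intros; apply deriv0; apply d_andI; thm; auto. Qed.
Lemma iff_l a b : iCB (Iff a b) -> iCB (Imp a b).
Proof. intros; apply deriv0; eapply d_andE1; thm; eauto. Qed.
Lemma iff_r a b : iCB (Iff a b) -> iCB (Imp b a).
Proof. intros; apply deriv0; eapply d_andE2; thm; eauto. Qed.

Lemma iCB_Top : iCB Top.
Proof. apply iCB_I. Qed.

Lemma cond_nec c t : iCB t -> iCB (Cond c t).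
Proof.
  intros Ht.
  assert (H1 : iCB (Iff t Top)).
  { apply iff_intro; apply thm_of; thm; [apply iCB_Top | auto]. }
  apply (rule_congR _ _ _ c) in H1.
  pose proof (rule_subst _ (fun n => c) _ (ax_CN iCB_axioms)) as H2. simpl in H2.
  apply iff_r in H1. apply iff_r in H2.
  apply (rule_MP _ _ _ H1). apply (rule_MP _ _ _ H2). apply iCB_Top.
Qed.

Definition s3 (a b c : form) : nat -> form :=
  fun n => match n with 0 => a | 1 => b | _ => c end.

Lemma cond_and_iff c a b : iCB (Iff (Cond c (And a b)) (And (Cond c a) (Cond c b))).
Proof. exact (rule_subst _ (s3 c a b) _ (ax_CM iCB_axioms)). Qed.

Lemma cond_mono c a b : iCB (Imp a b) -> iCB (Imp (Cond c a) (Cond c b)).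
Proof.
  intros H.
  assert (H1 : iCB (Iff a (And a b))).
  { apply iff_intro; apply thm_of.
    - apply d_andI; [hyp|]. eapply d_mp; [thm; exact H| hyp].
    - eapply d_andE1; hyp. }
  apply (rule_congR _ _ _ c) in H1. apply iff_l in H1.
  apply thm_of. eapply d_andE2. eapply d_mp; [thm; apply iff_l, cond_and_iff|].
  eapply d_mp; [thm; exact H1| hyp].
Qed.

Record world := {
  th : form -> Prop;
  th_closed : forall f, deriv th f -> th f;
  th_cons : ~ th Bot;
  th_prime : forall a b, th (Or a b) -> th a \/ th b }.

Section Lind.
Variable G : form -> Prop.
Variable phi : form.
Hypothesis HG : ~ deriv G phi.

Fixpoint chain (n : nat) : form -> Prop :=
  match n with
  | 0 => G
  | S n => fun x => chain n x \/ (enc x = n /\ ~ deriv (ext (chain n) x) phi)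
  end.

Lemma chain_mono n m : n <= m -> forall x, chain n x -> chain m x.
Proof. induction 1; auto. intros x Hx; simpl; left; auto. Qed.

Lemma chain_cons n : ~ deriv (chain n) phi.
Proof.
  induction n; simpl; auto.
  intros H.
  destruct (classic (exists x, enc x = n /\ ~ deriv (ext (chain n) x) phi)) as [[x [Hx1 Hx2]]|Hn].
  - apply Hx2. eapply deriv_mono; [|exact H].
    intros y [Hy|[Hy1 Hy2]]; [left; auto|right]. apply enc_inj; congruence.
  - apply IHn. eapply deriv_mono; [|exact H].
    intros y [Hy|[Hy1 Hy2]]; auto. exfalso; apply Hn; eauto.
Qed.

Definition Delta : form -> Prop := fun x => exists n, chain n x.

Lemma compact f : deriv Delta f -> exists n, deriv (chain n) f.
Proof.
  induction 1.
  - destruct H as [n Hn]; exists n; apply d_hyp; auto.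
  - exists 0; apply d_thm; auto.
  - destruct IHderiv1 as [n1 H1], IHderiv2 as [n2 H2].
    exists (max n1 n2). eapply d_mp.
    + eapply deriv_mono; [|exact H1]. apply chain_mono; lia.
    + eapply deriv_mono; [|exact H2]. apply chain_mono; lia.
Qed.

Lemma Delta_cons : ~ deriv Delta phi.
Proof. intros H; destruct (compact _ H) as [n Hn]; apply (chain_cons n Hn). Qed.

Lemma Delta_sub n x : chain n x -> Delta x.
Proof. intros; exists n; auto. Qed.

Lemma Delta_in x : ~ Delta x -> deriv Delta (Imp x phi).
Proof.
  intros Hx.
  destruct (classic (deriv (ext (chain (enc x)) x) phi)) as [H|H].
  - apply deduction in H. eapply deriv_mono; [|exact H]. intros; eapply Delta_sub; eauto.
  - exfalso; apply Hx. exists (S (enc x)). simpl; right; auto.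
Qed.

Lemma Delta_closed f : deriv Delta f -> Delta f.
Proof.
  intros H. apply NNPP; intros Hn. apply Delta_cons.
  eapply d_mp; [apply Delta_in; exact Hn | exact H].
Qed.

Lemma Delta_prime a b : Delta (Or a b) -> Delta a \/ Delta b.
Proof.
  intros H. apply NNPP; intros Hn.
  apply Delta_cons.
  assert (Ha : ~ Delta a) by tauto. assert (Hb : ~ Delta b) by tauto.
  eapply d_mp; [eapply d_mp; [eapply d_mp; [apply d_thm, ax_orE|]|]|].
  - apply Delta_in; exact Ha.
  - apply Delta_in; exact Hb.
  - apply d_hyp; exact H.
Qed.

Lemma Delta_nbot : ~ Delta Bot.
Proof.
  intros H; apply Delta_cons. eapply d_mp; [apply d_thm, ax_botE| apply d_hyp; exact H].
Qed.

Definition lind_world : world :=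
  {| th := Delta; th_closed := Delta_closed; th_cons := Delta_nbot; th_prime := Delta_prime |}.

End Lind.

Lemma lindenbaum G phi : ~ deriv G phi ->
  exists w : world, (forall x, G x -> th w x) /\ ~ th w phi.
Proof.
  intros H. exists (lind_world G phi H). split.
  - intros x Hx; exists 0; exact Hx.
  - intros Hd. apply (Delta_cons G phi H). apply d_hyp; exact Hd.
Qed.

Lemma th_thm (w : world) f : iCB f -> th w f.
Proof. intros; apply th_closed, d_thm; auto. Qed.
Lemma th_mp (w : world) a b : th w (Imp a b) -> th w a -> th w b.
Proof. intros; apply th_closed; eapply d_mp; apply d_hyp; eauto. Qed.
Lemma th_and (w : world) a b : th w (And a b) <-> th w a /\ th w b.
Proof.
  split.
  - intros H; split; apply th_closed; [eapply d_andE1|eapply d_andE2]; apply d_hyp; eauto.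
  - intros [H1 H2]; apply th_closed, d_andI; apply d_hyp; auto.
Qed.

Definition wle (u v : world) : Prop := forall f, th u f -> th v f.
Definition box (w : world) (c : form) : form -> Prop := fun f => th w (Cond c f).

Lemma box_closed w c f : deriv (box w c) f -> box w c f.
Proof.
  induction 1.
  - auto.
  - apply th_thm, cond_nec; auto.
  - unfold box in *.
    apply (th_mp w (Cond c (And (Imp a b) a))).
    + apply th_thm, cond_mono, thm_of. eapply d_mp; [eapply d_andE1; hyp | eapply d_andE2; hyp].
    + eapply th_mp; [apply th_thm, iff_r, cond_and_iff|]. apply th_and; auto.
Qed.

Lemma box_complete w c f : (forall v : world, subset (box w c) (th v) -> th v f) -> box w c f.
Proof.
  intros H. apply NNPP; intros Hn.
  destruct (lindenbaum (box w c) f) as [v [Hv1 Hv2]].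
  - intros Hd; apply Hn, box_closed, Hd.
  - apply Hv2. apply H. exact Hv1.
Qed.

Definition capt (w : world) (c : form) (a : world -> Prop) : Prop :=
  (forall v : world, subset (box w c) (th v) -> a v) /\ (forall v, a v -> th v c).

Definition Rc (a : world -> Prop) (w v : world) : Prop :=
  (exists c, capt w c a /\ subset (box w c) (th v)) \/
  ((~ exists c, capt w c a) /\ a v).

Lemma L_recip w c d :
  (forall v : world, subset (box w c) (th v) -> th v d) ->
  (forall v : world, subset (box w d) (th v) -> th v c) ->
  forall f, box w c f <-> box w d f.
Proof.
  intros H1 H2.
  apply box_complete in H1. apply box_complete in H2.
  unfold box in *.
  split; intros H.
  - eapply th_mp; [apply th_thm; exact (rule_subst _ (s3 c d f) _ (ax_G _ _ (or_intror (or_introl eq_refl))))|].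
    apply th_and; split; auto. apply th_and; auto.
  - eapply th_mp; [apply th_thm; exact (rule_subst _ (s3 d c f) _ (ax_G _ _ (or_intror (or_introl eq_refl))))|].
    apply th_and; split; auto. apply th_and; auto.
Qed.

Lemma L_ID (w : world) c : forall v : world, subset (box w c) (th v) -> th v c.
Proof.
  intros v Hv. apply Hv. unfold box.
  apply th_thm. exact (rule_subst _ (s3 c c c) _ (ax_G _ _ (or_introl (or_introl eq_refl)))).
Qed.

Lemma L_4 (w u v : world) c : subset (box w c) (th u) -> subset (box u c) (th v) -> subset (box w c) (th v).
Proof.
  intros H1 H2 f Hf. apply H2. apply H1. unfold box in *.
  eapply th_mp; [|exact Hf].
  apply th_thm. exact (rule_subst _ (s3 c f f) _ (ax_G _ _ (or_intror (or_intror eq_refl)))).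
Qed.

Lemma L_R_capt a w c v : capt w c a -> (Rc a w v <-> subset (box w c) (th v)).
Proof.
  intros Hc. split.
  - intros [[d [Hd Hs]]|[Hn _]].
    + intros f Hf. apply Hs.
      apply (L_recip w c d); auto.
      * intros u Hu. apply Hd, Hc, Hu.
      * intros u Hu. apply Hc, Hd, Hu.
    + exfalso; eauto.
  - intros H; left; eauto.
Qed.

Lemma L_R_sub a w v : Rc a w v -> a v.
Proof. intros [[c [Hc Hs]]|[_ H]]; auto. apply Hc; auto. Qed.

Lemma L_capt_mono w w' c a : wle w w' -> capt w c a -> capt w' c a.
Proof.
  intros Hw [H1 H2]; split; auto.
  intros v Hv; apply H1. intros f Hf; apply Hv, Hw, Hf.
Qed.

Lemma wle_refl w : wle w w. Proof. intros f H; exact H. Qed.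
Lemma wle_trans u v w : wle u v -> wle v w -> wle u w. Proof. intros H1 H2 f H; auto. Qed.

Lemma Rc_mono a : upset wle a -> rel_incl (comp wle (Rc a)) (comp (Rc a) wle).
Proof.
  intros Ha x z [y [Hxy Hyz]]. exists z; split; [|apply wle_refl].
  destruct (classic (exists c, capt x c a)) as [[c Hc]|Hn].
  - apply (L_R_capt _ _ _ _ Hc).
    pose proof (L_capt_mono _ _ _ _ Hxy Hc) as Hc'.
    apply (L_R_capt _ _ _ _ Hc') in Hyz.
    intros f Hf; apply Hyz, Hxy, Hf.
  - right; split; auto. eapply L_R_sub; eauto.
Qed.

Definition canon (h : inhabited world) : cframe :=
  {| W := world; le := wle; R := Rc; W_inhabited := h;
     le_refl := wle_refl; le_trans := wle_trans; R_mono := Rc_mono |}.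

Lemma recip_gen (x : world) (a b : world -> Prop) :
  (forall v, Rc a x v -> b v) -> (forall v, Rc b x v -> a v) ->
  forall v, Rc a x v <-> Rc b x v.
Proof.
  intros H1 H2.
  destruct (classic (exists c, capt x c a)) as [[c Hc]|Hna];
  destruct (classic (exists c, capt x c b)) as [[d Hd]|Hnb].
  - intros v. rewrite (L_R_capt _ _ _ v Hc), (L_R_capt _ _ _ v Hd).
    assert (E : forall f, box x c f <-> box x d f).
    { apply L_recip.
      - intros u Hu. apply Hd, H1. apply (L_R_capt _ _ _ _ Hc), Hu.
      - intros u Hu. apply Hc, H2. apply (L_R_capt _ _ _ _ Hd), Hu. }
    split; intros H f Hf; apply H, E, Hf.
  - exfalso; apply Hnb. exists c. split.
    + intros u Hu. apply H1, (L_R_capt _ _ _ _ Hc), Hu.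
    + intros u Hu. apply Hc, H2. right; auto.
  - exfalso; apply Hna. exists d. split.
    + intros u Hu. apply H2, (L_R_capt _ _ _ _ Hd), Hu.
    + intros u Hu. apply Hd, H1. right; auto.
  - intros v; split; intros H.
    + right; split; [exact Hnb | apply H1, H].
    + right; split; [exact Hna | apply H2, H].
Qed.

Lemma canon_cautious h : cautious (canon h).
Proof.
  intros x a b Ha Hb. split.
  - intros v Hv; eapply L_R_sub; eauto.
  - intros H1 H2. simpl in *.
    assert (E : forall v, Rc a x v <-> Rc b x v).
    { apply recip_gen; auto. intros v Hv; apply H2; eapply L_R_sub; eauto. }
    intros z; split; intros [y [Hy1 Hy2]]; exists y; split; auto; apply E; auto.
Qed.

Lemma canon_cond h : iCB_frame_cond (canon h).
Proof.
  split.
  - intros x a b Ha Hb H1 H2. simpl in *.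
    assert (E : forall v, Rc a x v <-> Rc b x v) by (apply recip_gen; auto).
    intros z; split; intros [y [Hy1 Hy2]]; exists y; split; auto; apply E; auto.
  - intros a Ha x z [y [Hxy Hyz]]. simpl in *. exists z; split; [|apply wle_refl].
    destruct (classic (exists c, capt x c a)) as [[c Hc]|Hn].
    + apply (L_R_capt _ _ _ _ Hc). apply (L_R_capt _ _ _ _ Hc) in Hxy.
      assert (Hc' : capt y c a).
      { split; [|apply Hc]. intros u Hu. apply Hc. eapply L_4; eauto. }
      apply (L_R_capt _ _ _ _ Hc') in Hyz. eapply L_4; eauto.
    + right; split; auto. eapply L_R_sub; eauto.
Qed.

Section Truth.
Variable h : inhabited world.
Definition cV : nat -> W (canon h) -> Prop := fun n w => th w (Var n).

Lemma cV_val : valuation (canon h) cV.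
Proof. intros n x y Hxy Hx; apply Hxy, Hx. Qed.

Lemma truth f : forall w : world, forces (canon h) cV f w <-> th w f.
Proof.
  induction f; intros w; simpl.
  - reflexivity.
  - split; [tauto| apply th_cons].
  - rewrite th_and, IHf1, IHf2; tauto.
  - rewrite IHf1, IHf2. split.
    + intros [H|H]; apply th_closed.
      * apply d_mp with f1; [apply d_thm, ax_orI1 | apply d_hyp; exact H].
      * apply d_mp with f2; [apply d_thm, ax_orI2 | apply d_hyp; exact H].
    + apply th_prime.
  - split.
    + intros H. apply NNPP; intros Hn.
      destruct (lindenbaum (ext (th w) f1) f2) as [v [Hv1 Hv2]].
      * intros Hd. apply Hn, th_closed, deduction, Hd.
      * apply Hv2. apply IHf2. apply H.
        -- intros x Hx; apply Hv1; left; exact Hx.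
        -- apply IHf1, Hv1; right; reflexivity.
    + intros H v Hwv Hv. apply IHf2. apply IHf1 in Hv. apply (th_mp v f1 f2); [apply Hwv, H | exact Hv].
  - assert (Hc : capt w f1 (forces (canon h) cV f1)).
    { split.
      - intros v Hv. apply IHf1. apply (L_ID w f1 v Hv).
      - intros v Hv. apply IHf1, Hv. }
    split.
    + intros H. apply box_complete. intros v Hv. apply IHf2, H.
      apply (L_R_capt _ _ _ _ Hc), Hv.
    + intros H v Hv. apply IHf2. apply (L_R_capt _ _ _ _ Hc) in Hv. apply Hv, H.
Qed.
End Truth.

Theorem theorem6p11 : forall f : form,
  iCB f <-> (forall F : cframe, cautious F -> iCB_frame_cond F -> valid F f).
Proof.
  intros f; split.
  - intros H F Hc Hcond. apply soundness; auto.
  - intros Hv. apply NNPP; intros Hn.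
    destruct (lindenbaum E0 f) as [w [_ Hw]].
    + intros Hd; apply Hn, deriv0, Hd.
    + apply Hw. apply (truth (inhabits w)).
      apply (Hv (canon (inhabits w)) (canon_cautious _) (canon_cond _) (cV (inhabits w)) (cV_val _)).
Qed.
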